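(* Let $V$ and $W$ be real inner product spaces of dimension $2$ and $3$ respectively, let $A:[0,1]\to\mathrm{Hom}(W,W)$ be a smooth path of positive self-adjoint operators and let $T:[0,1]\to\mathrm{Hom}(V,W)$ be a smooth path with $\ddot T(s)=A(s)\circ T(s)$. Then $u(s):=\|T(s)\|_1$ is convex on $[0,1]$. Moreover, if $T(s)$ has rank $2$ and $A(s)\circ T(s)\neq0$, then $\ddot u(s)>0$.
   Context: For $L\in\mathrm{Hom}(V,W)$, $\|L\|_1=\operatorname{tr}\sqrt{L^TL}$ ($1$-Schatten norm), with $L^T$ the adjoint. *)

(* Defs.v *)
(* V = R^2, W = R^3 with the standard inner product;
   Hom(V,W) = 3x2 real matrices, adjoint = transpose. *)
From HB Require Import structures.
From mathcomp Require Import all_boot all_order all_algebra.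
From mathcomp Require Import all_classical all_reals all_analysis.
Set Implicit Arguments. Unset Strict Implicit. Unset Printing Implicit Defensive.
Import Order.TTheory GRing.Theory Num.Theory.
Local Open Scope ring_scope.
Local Open Scope classical_set_scope.

Definition psd_mx (R : realType) (n : nat) (S : 'M[R]_n) : Prop :=
  S^T = S /\ forall v : 'cV[R]_n, 0 <= (v^T *m S *m v) 0 0.

Definition sqrt_mx (R : realType) (n : nat) (M : 'M[R]_n) : 'M[R]_n :=
  xget 0 [set S : 'M[R]_n | psd_mx S /\ S *m S = M].

Definition schatten1 (R : realType) (m n : nat) (L : 'M[R]_(m, n)) : R :=
  \tr (sqrt_mx (L^T *m L)).

Definition smooth_fun (R : realType) (f : R -> R) : Prop :=
  forall (k : nat) (x : R), derivable (iter k (@derive1 R R) f) x 1.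

Definition convex_on (R : realType) (a b : R) (u : R -> R) : Prop :=
  forall x y t : R, a <= x <= b -> a <= y <= b -> 0 <= t <= 1 ->
    u ((1 - t) * x + t * y) <= (1 - t) * u x + t * u y.

(* Main.v *)
From HB Require Import structures.
From mathcomp Require Import all_boot all_order all_algebra.
From mathcomp Require Import all_classical all_reals all_analysis.
From mathcomp Require Import ring lra.
Require Import Defs.
Import Order.TTheory GRing.Theory Num.Theory.
Import numFieldNormedType.Exports.
Local Open Scope ring_scope.
Local Open Scope classical_set_scope.

Section Deriv.
Set Implicit Arguments. Unset Strict Implicit.
Context {R : realType}.
Implicit Types f g : R -> R.

Definition dv f (x : R) : Prop := derivable f x 1.
Definition D1 f : R -> R := derive1 f.

Lemma D1E f x : D1 f x = 'D_1 f x.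
Proof. exact: derive1E. Qed.

Lemma dvP f (x : R) : dv f x -> is_derive x 1 f (D1 f x).
Proof. by move=> h; rewrite D1E; exact: derivableP. Qed.

Lemma is_dv f (x l : R) : is_derive x 1 f l -> dv f x /\ D1 f x = l.
Proof. move=> H; split; first exact: (@ex_derive _ _ _ _ _ _ _ H). by rewrite D1E; exact: (@derive_val _ _ _ _ _ _ _ H). Qed.

Lemma is_derive_ext f g (x l : R) : (forall y, f y = g y) -> is_derive x 1 f l -> is_derive x 1 g l.
Proof. by move=> e; have -> : f = g by apply/funext. Qed.

Definition Sm f := forall x, dv f x /\ dv (D1 f) x.

Lemma der_cont f x : dv f x -> {for x, continuous f}.
Proof. by move=> /derivable1_diffP /differentiable_continuous. Qed.

Lemma d1_add f g x : dv f x -> dv g x -> dv (fun y => f y + g y) x /\ D1 (fun y => f y + g y) x = D1 f x + D1 g x.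
Proof. move=> df dg; apply: is_dv; apply: (is_derive_ext _ (is_deriveD (dvP df) (dvP dg))) => y; by []. Qed.

Lemma d1_sub f g x : dv f x -> dv g x -> dv (fun y => f y - g y) x /\ D1 (fun y => f y - g y) x = D1 f x - D1 g x.
Proof. move=> df dg; apply: is_dv; apply: (is_derive_ext _ (is_deriveB (dvP df) (dvP dg))) => y; by []. Qed.

Lemma d1_mul f g x : dv f x -> dv g x ->
  dv (fun y => f y * g y) x /\ D1 (fun y => f y * g y) x = D1 f x * g x + f x * D1 g x.
Proof.
move=> df dg; have [h1 h2] := is_dv (is_derive_ext (fun y => erefl) (is_deriveM (dvP df) (dvP dg))).
split; first exact: h1.
rewrite h2; change (f x * D1 g x + g x * D1 f x = D1 f x * g x + f x * D1 g x).
by rewrite addrC [g x * _]mulrC.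
Qed.

Lemma d1_cst (k : R) x : dv (fun _ => k) x /\ D1 (fun _ => k) x = 0.
Proof. apply: is_dv; exact: is_derive_cst. Qed.

Lemma Sm_add f g : Sm f -> Sm g -> Sm (fun y => f y + g y).
Proof.
move=> hf hg x; split; first exact: (d1_add (hf x).1 (hg x).1).1.
have -> : D1 (fun y => f y + g y) = (fun y => D1 f y + D1 g y).
  by apply/funext => y; exact: (d1_add (hf y).1 (hg y).1).2.
exact: (d1_add (hf x).2 (hg x).2).1.
Qed.

Lemma Sm_mul f g : Sm f -> Sm g -> Sm (fun y => f y * g y).
Proof.
move=> hf hg x; split; first exact: (d1_mul (hf x).1 (hg x).1).1.
have -> : D1 (fun y => f y * g y) = (fun y => D1 f y * g y + f y * D1 g y).
  by apply/funext => y; exact: (d1_mul (hf y).1 (hg y).1).2.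
exact: (d1_add (d1_mul (hf x).2 (hg x).1).1 (d1_mul (hf x).1 (hg x).2).1).1.
Qed.

Lemma Sm_cst (k : R) : Sm (fun _ => k).
Proof.
move=> x; split; first exact: (d1_cst k x).1.
have -> : D1 (fun _ : R => k) = (fun _ => 0) by apply/funext => y; exact: (d1_cst k y).2.
exact: (d1_cst 0 x).1.
Qed.

Lemma near_ball (P : R -> Prop) (t : R) : (\forall x \near t, P x) -> exists2 e : R, 0 < e & forall y, `|t - y| < e -> P y.
Proof. move=> /nbhs_ballP [e e0 H]; exists e => // y hy; by apply: H. Qed.
Lemma near0_ball (P : R -> Prop) : (\forall x \near 0^', P x) -> exists2 e : R, 0 < e & forall y, `|y| < e -> y != 0 -> P y.
Proof. move=> /nbhs_ballP [e e0 H]; exists e => // y hy hy0; apply: H => //. by rewrite -ball_normE /ball_ /= sub0r normrN. Qed.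

Lemma near_eq_d f g t (l : R) : (\forall x \near t, f x = g x) -> is_derive t 1 g l -> dv f t /\ D1 f t = l.
Proof.
move=> e H; apply: is_dv.
have e' : \forall x \near t, g x = f x by apply: filterS e => x ->.
exact: (near_eq_is_derive e' H).
Qed.

Definition C2at f t := (\forall x \near t, dv f x) /\ dv (D1 f) t.

Lemma Sm_C2at f t : Sm f -> C2at f t.
Proof. move=> hf; split; last exact: (hf t).2. exact: (filterS (fun x _ => (hf x).1) filterT). Qed.

Lemma C2at_add f g t : C2at f t -> C2at g t -> C2at (fun y => f y + g y) t.
Proof.
move=> [hf1 hf2] [hg1 hg2]; split.
  exact: (filterS2 _ (fun x a b => (d1_add a b).1) hf1 hg1).
have e : \forall x \near t, D1 (fun y => f y + g y) x = (fun y => D1 f y + D1 g y) x.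
  exact: (filterS2 _ (fun x a b => (d1_add a b).2) hf1 hg1).
exact: (near_eq_d e (dvP (d1_add hf2 hg2).1)).1.
Qed.

Lemma C2at_mul f g t : C2at f t -> C2at g t -> C2at (fun y => f y * g y) t.
Proof.
move=> [hf1 hf2] [hg1 hg2]; split.
  exact: (filterS2 _ (fun x a b => (d1_mul a b).1) hf1 hg1).
have e : \forall x \near t, D1 (fun y => f y * g y) x = (fun y => D1 f y * g y + f y * D1 g y) x.
  exact: (filterS2 _ (fun x a b => (d1_mul a b).2) hf1 hg1).
have ft := nbhs_singleton hf1; have gt := nbhs_singleton hg1.
exact: (near_eq_d e (dvP (d1_add (d1_mul hf2 gt).1 (d1_mul ft hg2).1).1)).1.
Qed.

Lemma C2at_sub f g t : C2at f t -> C2at g t ->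
  C2at (fun y => f y - g y) t /\ D1 (D1 (fun y => f y - g y)) t = D1 (D1 f) t - D1 (D1 g) t.
Proof.
move=> [hf1 hf2] [hg1 hg2].
have e : \forall x \near t, D1 (fun y => f y - g y) x = (fun y => D1 f y - D1 g y) x.
  exact: (filterS2 _ (fun x a b => (d1_sub a b).2) hf1 hg1).
have [h1 h2] := near_eq_d e (dvP (d1_sub hf2 hg2).1).
split; last by rewrite h2 (d1_sub hf2 hg2).2.
split; [exact: (filterS2 _ (fun x a b => (d1_sub a b).1) hf1 hg1) | exact: h1].
Qed.

Lemma C2at_sqrt f t : C2at f t -> 0 < f t -> C2at (fun y => Num.sqrt (f y)) t.
Proof.
move=> [hf1 hf2] ft0.
have fc : {for t, continuous f} by apply: der_cont; exact: nbhs_singleton hf1.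
have := fc; move=> /cvgr_gt /(_ 0 ft0) fpos.
have isd : forall x, 0 < f x -> dv f x ->
    is_derive x 1 (fun y => Num.sqrt (f y)) ((2 * Num.sqrt (f x))^-1 * D1 f x).
  move=> x fx dx.
  apply: (@is_derive1_comp _ Num.sqrt f x); last exact: dvP.
  exact: is_derive1_sqrt.
split.
  exact: (filterS2 _ (fun x a b => (is_dv (isd x a b)).1) fpos hf1).
have e : \forall x \near t, D1 (fun y => Num.sqrt (f y)) x = (fun y => (2 * Num.sqrt (f y))^-1 * D1 f y) x.
  exact: (filterS2 _ (fun x a b => (is_dv (isd x a b)).2) fpos hf1).
apply: (near_eq_d e _).1.
apply: dvP; apply: (d1_mul _ hf2).1.
have ds : dv (fun y => 2 * Num.sqrt (f y)) t.
  exact: (d1_mul (d1_cst 2 t).1 (is_dv (isd t ft0 (nbhs_singleton hf1))).1).1.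
rewrite /dv; apply: derivableV => //.
by rewrite mulf_neq0 // gt_eqF // sqrtr_gt0.
Qed.

Lemma d2_min (h : R -> R) t : (\forall x \near t, dv h x) ->
  dv (D1 h) t -> (forall x, 0 <= h x) -> h t = 0 ->
  0 <= D1 (D1 h) t.
Proof.
move=> /near_ball [e e0 dh] dh1 hge0 ht0.
rewrite /dv /D1 in dh dh1 *.
have h1t : derive1 h t = 0.
  rewrite derive1E; apply: derive_val.
  apply: (@derive1_at_min _ h (t - e) (t + e) t).
  - lra.
  - move=> y; rewrite in_itv /= => /andP [a b]; apply: dh.
    rewrite ltr_norml; apply/andP; split; lra.
  - rewrite in_itv /=; apply/andP; split; lra.
  - move=> y _; rewrite ht0; exact: hge0.
rewrite leNgt; apply/negP => hlt.
have conv : (fun d : R => d^-1 *: ((derive1 h \o shift t) (d *: 1) - derive1 h t)) @ 0^' --> 'D_1 (derive1 h) t := dh1.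
rewrite derive1E in hlt.
move: (conv) => /cvgr_lt /(_ 0 hlt) /near0_ball [e2 e20 He2].
pose d := Num.min e e2 / 2.
have d0 : 0 < d by rewrite /d divr_gt0 // lt_min e0 e20.
have m1 : Num.min e e2 <= e by rewrite ge_min lexx.
have m2 : Num.min e e2 <= e2 by rewrite ge_min lexx orbT.
have m0 : 0 < Num.min e e2 by rewrite lt_min e0 e20.
have de : d < e by rewrite /d; lra.
have de2 : d < e2 by rewrite /d; lra.
have tt : t < t + d by lra.
have hd : forall x, x \in `]t, t + d[%R -> is_derive x 1 h (derive1 h x).
  move=> x; rewrite in_itv /= => /andP [a b].
  rewrite derive1E; apply: derivableP; apply: dh.
  rewrite ltr_norml; apply/andP; split; lra.
have hc : {within `[t, t + d], continuous h}.
  apply: derivable_within_continuous => x; rewrite in_itv /= => /andP [a b].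
  apply: dh; rewrite ltr_norml; apply/andP; split; lra.
have [c cI hcv] := MVT tt hd hc.
move: cI; rewrite in_itv /= => /andP [c1 c2].
have := He2 (c - t).
rewrite /= [(c - t)%:A]mulr1 subrK h1t subr0.
have -> : `|c - t| = c - t by rewrite ger0_norm //; lra.
have ct : 0 < c - t by lra.
move=> /(_ _ _)/Wrap[]; [lra | by rewrite gt_eqF |].
move=> q.
have hc0 : derive1 h c < 0.
  by move: q; rewrite /GRing.scale /= pmulr_rlt0 // invr_gt0.
have e1 : h (t + d) = derive1 h c * d.
  by move: hcv; rewrite ht0 subr0 => ->; congr (_ * _); ring.
have := hge0 (t + d); rewrite e1 pmulr_lge0 //; lra.
Qed.


Unset Implicit Arguments.
End Deriv.

Section Alg.
Context {R : realType}.

Lemma sum3 (F : 'I_3 -> R) : \sum_(i < 3) F i = F 0 + F 1 + F 2.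
Proof. rewrite !big_ord_recr big_ord0 /= add0r. by congr (F _ + F _ + F _); apply: val_inj. Qed.
Lemma sum2 (F : 'I_2 -> R) : \sum_(i < 2) F i = F 0 + F 1.
Proof. rewrite !big_ord_recr big_ord0 /= add0r. by congr (F _ + F _); apply: val_inj. Qed.
Lemma ord2 (i : 'I_2) : i = 0 \/ i = 1.
Proof. case: i => [[|[|//]] hi]; [left|right]; exact: val_inj. Qed.

Lemma mul22 (S U : 'M[R]_2) i j : (S *m U) i j = S i 0 * U 0 j + S i 1 * U 1 j.
Proof. by rewrite mxE sum2. Qed.

Lemma qf2g (S : 'M[R]_2) (v : 'cV[R]_2) :
  (v^T *m S *m v) 0 0 = S 0 0 * v 0 0 ^+ 2 + (S 0 1 + S 1 0) * v 0 0 * v 1 0 + S 1 1 * v 1 0 ^+ 2.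
Proof. rewrite mxE sum2 !mxE !sum2 !mxE /=. ring. Qed.
Lemma qf2 (S : 'M[R]_2) (p q : R) :
  let v : 'cV[R]_2 := \matrix_(i, j) (if i == 0 then p else q) in
  (v^T *m S *m v) 0 0 = S 0 0 * p ^+ 2 + (S 0 1 + S 1 0) * p * q + S 1 1 * q ^+ 2.
Proof. move=> v; rewrite qf2g !mxE /=. ring. Qed.

Lemma psd2 (S : 'M[R]_2) : psd_mx S ->
  S 1 0 = S 0 1 /\ 0 <= S 0 0 /\ 0 <= S 1 1 /\ S 0 1 ^+ 2 <= S 0 0 * S 1 1.
Proof.
move=> [hs hq].
have sym : S 1 0 = S 0 1 by rewrite -{1}hs mxE.
have Q p q : 0 <= S 0 0 * p ^+ 2 + 2 * S 0 1 * p * q + S 1 1 * q ^+ 2.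
  have := hq (\matrix_(i, j) (if i == 0 then p else q)); rewrite qf2 sym.
  by have -> : (S 0 1 + S 0 1) = 2 * S 0 1 by ring.
have a0 : 0 <= S 0 0 by have := Q 1 0; rewrite !(expr0n, expr1n, mulr0, mul0r, mulr1, add0r, addr0).
have c0 : 0 <= S 1 1 by have := Q 0 1; rewrite !(expr0n, expr1n, mulr0, mul0r, mulr1, add0r, addr0).
do 3 (split => //).
have Q1 := Q (S 0 1) (- S 0 0).
have Q2 := Q (S 1 1) (- S 0 1).
have Q3 := Q 1 (- S 0 1).
set a := S 0 0 in a0 Q1 Q2 Q3 *; set b := S 0 1 in Q1 Q2 Q3 *; set c := S 1 1 in c0 Q1 Q2 Q3 *.
have e1 : 0 <= a * (a * c - b ^+ 2) by apply: (le_trans Q1); rewrite le_eqVlt; apply/orP; left; apply/eqP; ring.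
have e2 : 0 <= c * (a * c - b ^+ 2) by apply: (le_trans Q2); rewrite le_eqVlt; apply/orP; left; apply/eqP; ring.
have e3 : 0 <= a - 2 * b ^+ 2 + c * b ^+ 2 by apply: (le_trans Q3); rewrite le_eqVlt; apply/orP; left; apply/eqP; ring.
rewrite -subr_ge0.
have [ap|a00] := boolP (0 < a); first by move: e1; rewrite pmulr_rge0.
have [cp|c00] := boolP (0 < c); first by move: e2; rewrite pmulr_rge0.
have az : a = 0 by apply/eqP; rewrite eq_le a0 andbT leNgt.
have cz : c = 0 by apply/eqP; rewrite eq_le c0 andbT leNgt.
move: e3; rewrite az cz; nra.
Qed.

Definition Mg (L : 'M[R]_(3,2)) : 'M[R]_2 := L^T *m L.
Definition ga L := Mg L 0 0.
Definition gb L := Mg L 0 1.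
Definition gc L := Mg L 1 1.
Definition gG L := ga L * gc L - gb L ^+ 2.
Definition nuc L := Num.sqrt (ga L + gc L + 2 * Num.sqrt (gG L)).

Lemma MgE L i j : Mg L i j = L 0 i * L 0 j + L 1 i * L 1 j + L 2 i * L 2 j.
Proof. by rewrite /Mg mxE sum3 !mxE. Qed.

Lemma gaE L : ga L = L 0 0 ^+ 2 + L 1 0 ^+ 2 + L 2 0 ^+ 2.
Proof. by rewrite /ga MgE !expr2. Qed.
Lemma gcE L : gc L = L 0 1 ^+ 2 + L 1 1 ^+ 2 + L 2 1 ^+ 2.
Proof. by rewrite /gc MgE !expr2. Qed.
Lemma gbE L : gb L = L 0 0 * L 0 1 + L 1 0 * L 1 1 + L 2 0 * L 2 1.
Proof. by rewrite /gb MgE. Qed.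

Lemma gGE L : gG L = (L 0 0 * L 1 1 - L 1 0 * L 0 1) ^+ 2 + (L 0 0 * L 2 1 - L 2 0 * L 0 1) ^+ 2
   + (L 1 0 * L 2 1 - L 2 0 * L 1 1) ^+ 2.
Proof. rewrite /gG gaE gbE gcE. ring. Qed.

Lemma gG_ge0 L : 0 <= gG L.
Proof. by rewrite gGE !addr_ge0 ?sqr_ge0. Qed.
Lemma ga_ge0 L : 0 <= ga L.
Proof. by rewrite gaE !addr_ge0 ?sqr_ge0. Qed.
Lemma gc_ge0 L : 0 <= gc L.
Proof. by rewrite gcE !addr_ge0 ?sqr_ge0. Qed.

Lemma tr2 (S : 'M[R]_2) : \tr S = S 0 0 + S 1 1.
Proof. by rewrite /mxtrace sum2. Qed.

Lemma trace_sqrt L (S : 'M[R]_2) : psd_mx S -> S *m S = Mg L -> \tr S = nuc L.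
Proof.
move=> /psd2 [sym [p0 [r0 d0]]] SS.
have e00 : ga L = S 0 0 ^+ 2 + S 0 1 ^+ 2 by rewrite /ga -SS mul22 sym; ring.
have e01 : gb L = S 0 1 * (S 0 0 + S 1 1) by rewrite /gb -SS mul22; ring.
have e11 : gc L = S 0 1 ^+ 2 + S 1 1 ^+ 2 by rewrite /gc -SS mul22 sym; ring.
have eG : gG L = (S 0 0 * S 1 1 - S 0 1 ^+ 2) ^+ 2 by rewrite /gG e00 e01 e11; ring.
rewrite /nuc eG sqrtr_sqr ger0_norm ?subr_ge0 // e00 e11 tr2.
have -> : S 0 0 ^+ 2 + S 0 1 ^+ 2 + (S 0 1 ^+ 2 + S 1 1 ^+ 2) + 2 * (S 0 0 * S 1 1 - S 0 1 ^+ 2)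
   = (S 0 0 + S 1 1) ^+ 2 by ring.
by rewrite sqrtr_sqr ger0_norm // addr_ge0.
Qed.


Lemma eq_via (x y k z w : R) : z = w -> x - y = k * (z - w) -> x = y.
Proof. move=> -> h; apply/eqP; rewrite -subr_eq0 h subrr mulr0. by []. Qed.

Lemma eq_via2 (x y k1 z1 w1 k2 z2 w2 : R) : z1 = w1 -> z2 = w2 ->
  x - y = k1 * (z1 - w1) + k2 * (z2 - w2) -> x = y.
Proof. move=> -> -> h; apply/eqP; rewrite -subr_eq0 h !subrr !mulr0 addr0. by []. Qed.

Lemma eq_via3 (x y k1 z1 w1 k2 z2 w2 k3 z3 w3 : R) : z1 = w1 -> z2 = w2 -> z3 = w3 ->
  x - y = k1 * (z1 - w1) + k2 * (z2 - w2) + k3 * (z3 - w3) -> x = y.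
Proof. move=> -> -> -> h; apply/eqP; rewrite -subr_eq0 h !subrr !mulr0 !addr0. by []. Qed.

Lemma exists_sqrt L : exists S : 'M[R]_2, psd_mx S /\ S *m S = Mg L.
Proof.
set a := ga L; set b := gb L; set c := gc L.
set g := Num.sqrt (gG L); set t := Num.sqrt (a + c + 2 * g).
have g0 : 0 <= g by apply: sqrtr_ge0.
have g2 : g ^+ 2 = a * c - b ^+ 2 by rewrite /g sqr_sqrtr // gG_ge0.
have a0 : 0 <= a by apply: ga_ge0.
have c0 : 0 <= c by apply: gc_ge0.
have t2 : t ^+ 2 = a + c + 2 * g by rewrite /t sqr_sqrtr // !addr_ge0 // mulr_ge0.
have M01 : Mg L 1 0 = b by rewrite /b /gb !MgE; ring.
have [tp|tn] := boolP (0 < t); last first.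
  have tz : t = 0 by apply/eqP; rewrite eq_le sqrtr_ge0 andbT leNgt.
  have : a + c + 2 * g = 0 by rewrite -t2 tz expr0n.
  move=> h.
  have az : a = 0 by lra.
  have cz : c = 0 by lra.
  have gz : g = 0 by lra.
  have bz : b = 0 by move: g2; rewrite az cz gz expr0n /= mulr0 sub0r => /eqP; rewrite eq_sym oppr_eq0 sqrf_eq0 => /eqP.
  exists 0; split; first by split; [rewrite trmx0 | move=> v; rewrite mulmx0 mul0mx mxE].
  rewrite mulmx0; apply/matrixP => i j; rewrite mxE.
  by case: (ord2 i) => ->; case: (ord2 j) => ->; rewrite ?M01 -/a -/b -/c ?az ?bz ?cz.
exists (t^-1 *: (Mg L + g%:M)).
have Se i j : (t^-1 *: (Mg L + g%:M)) i j = t^-1 * (Mg L i j + g *+ (i == j)).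
  by rewrite !mxE.
split; first split.
- apply/matrixP => i j; rewrite mxE !Se.
  by case: (ord2 i) => ->; case: (ord2 j) => ->; rewrite ?M01.
- move=> v; rewrite qf2g !Se /= M01 -/a -/b -/c.
  rewrite mulr0n mulr1n !addr0.
  have -> : t^-1 * (a + g) * v 0 0 ^+ 2 + (t^-1 * b + t^-1 * b) * v 0 0 * v 1 0 + t^-1 * (c + g) * v 1 0 ^+ 2
    = t^-1 * ((L 0 0 * v 0 0 + L 0 1 * v 1 0) ^+ 2 + (L 1 0 * v 0 0 + L 1 1 * v 1 0) ^+ 2 + (L 2 0 * v 0 0 + L 2 1 * v 1 0) ^+ 2
       + g * (v 0 0 ^+ 2 + v 1 0 ^+ 2)).
    rewrite /a /b /c /ga /gb /gc !MgE; ring.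
  apply: mulr_ge0; first by rewrite invr_ge0 ltW.
  by rewrite !addr_ge0 ?sqr_ge0 // mulr_ge0 // addr_ge0 ?sqr_ge0.
- apply/matrixP => i j; rewrite mul22 !Se /=.
  have tn0 : t != 0 by rewrite gt_eqF.
  have u2 : t^-1 ^+ 2 * (a + c + 2 * g) = 1 by rewrite -t2 exprVn mulVf // expf_neq0.
  case: (ord2 i) => ->; case: (ord2 j) => -> /=; rewrite ?M01 ?mulr0n ?mulr1n ?addr0;
   change (Mg L 0 0) with a; change (Mg L 0 1) with b; change (Mg L 1 1) with c.
  + by apply: (@eq_via2 _ _ a _ _ (t^-1 ^+ 2) _ _ u2 g2); ring.
  + by apply: (@eq_via2 _ _ b _ _ 0 _ _ u2 g2); ring.
  + by apply: (@eq_via2 _ _ b _ _ 0 _ _ u2 g2); ring.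
  + by apply: (@eq_via2 _ _ c _ _ (t^-1 ^+ 2) _ _ u2 g2); ring.
Qed.


Lemma schatten1E L : schatten1 L = nuc L.
Proof.
rewrite /schatten1 /sqrt_mx. have [S [hp hs]] := exists_sqrt L.
have := @xgetPex _ 0 [set S : 'M[R]_2 | psd_mx S /\ S *m S = L^T *m L] (ex_intro _ S (conj hp hs)).
case=> h1 h2; exact: trace_sqrt.
Qed.

Lemma le_sqrt_sq (S Z : R) : S ^+ 2 <= Z -> S <= Num.sqrt Z.
Proof.
move=> h; have [S0|S0] := leP S 0; first exact: (le_trans S0 (sqrtr_ge0 _)).
by rewrite -(ger0_norm (ltW S0)) -sqrtr_sqr ler_wsqrtr.
Qed.

Definition dot3 (v w : 'I_3 -> R) := v 0 * w 0 + v 1 * w 1 + v 2 * w 2.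
Definition linq (q r : 'I_3 -> R) (L : 'M[R]_(3,2)) := \sum_(i < 3) (q i * L i 0 + r i * L i 1).

Lemma bessel (q0 q1 q2 r0 r1 r2 v0 v1 v2 : R) :
  q0^+2+q1^+2+q2^+2 = 1 -> r0^+2+r1^+2+r2^+2 = 1 -> q0*r0+q1*r1+q2*r2 = 0 ->
  (q0*v0+q1*v1+q2*v2)^+2 + (r0*v0+r1*v1+r2*v2)^+2 <= v0^+2+v1^+2+v2^+2.
Proof. move=> h1 h2 h3. set a := q0*v0+q1*v1+q2*v2; set b := r0*v0+r1*v1+r2*v2.
rewrite -subr_ge0.
have -> : v0^+2+v1^+2+v2^+2 - (a^+2 + b^+2) = (v0 - a*q0 - b*r0)^+2 + (v1 - a*q1 - b*r1)^+2 + (v2 - a*q2 - b*r2)^+2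
   - a^+2 * (q0^+2+q1^+2+q2^+2 - 1) - b^+2 * (r0^+2+r1^+2+r2^+2 - 1) - 2*a*b*(q0*r0+q1*r1+q2*r2).
  rewrite /a /b; ring.
rewrite h1 h2 h3 !subrr !mulr0 !subr0; by rewrite !addr_ge0 ?sqr_ge0.
Qed.

Lemma key_ineq q r L : dot3 q q = 1 -> dot3 r r = 1 -> dot3 q r = 0 -> linq q r L <= nuc L.
Proof.
rewrite /dot3 /linq sum3 /nuc => hq hr hqr.
have Gdef := gGE L.
rewrite gaE gcE.
set x0 := L 0 0; set x1 := L 1 0; set x2 := L 2 0; set y0 := L 0 1; set y1 := L 1 1; set y2 := L 2 1.
rewrite -/x0 -/x1 -/x2 -/y0 -/y1 -/y2 in Gdef.
set q0 := q 0; set q1 := q 1; set q2 := q 2; set r0 := r 0; set r1 := r 1; set r2 := r 2.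
rewrite -!expr2 in hq hr.
set C11 := q0*x0+q1*x1+q2*x2; set C21 := r0*x0+r1*x1+r2*x2.
set C12 := q0*y0+q1*y1+q2*y2; set C22 := r0*y0+r1*y1+r2*y2.
have bx : C11^+2 + C21^+2 <= x0^+2+x1^+2+x2^+2 by apply: bessel.
have by_ : C12^+2 + C22^+2 <= y0^+2+y1^+2+y2^+2 by apply: bessel.
set det := C11 * C22 - C12 * C21.
set n0 := q1*r2 - q2*r1; set n1 := q2*r0 - q0*r2; set n2 := q0*r1 - q1*r0.
set w0 := x1*y2 - x2*y1; set w1 := x2*y0 - x0*y2; set w2 := x0*y1 - x1*y0.
have hdet : det ^+ 2 <= gG L.
  rewrite -subr_ge0.
  have -> : gG L - det ^+ 2 = (n1*w2 - n2*w1)^+2 + (n2*w0 - n0*w2)^+2 + (n0*w1 - n1*w0)^+2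
     + (w0^+2 + w1^+2 + w2^+2) * (1 - ((q0^+2+q1^+2+q2^+2) * (r0^+2+r1^+2+r2^+2) - (q0*r0+q1*r1+q2*r2)^+2)).
    rewrite Gdef /det /C11 /C12 /C21 /C22 /n0 /n1 /n2 /w0 /w1 /w2; ring.
  rewrite hq hr hqr expr0n /= subr0 mulr1 subrr mulr0 addr0.
  by rewrite !addr_ge0 ?sqr_ge0.
have hdet' : det <= Num.sqrt (gG L).
  apply: le_trans (ler_norm det) _; rewrite -sqrtr_sqr; exact: ler_wsqrtr.
apply: le_sqrt_sq.
have -> : q0 * x0 + r0 * y0 + (q1 * x1 + r1 * y1) + (q2 * x2 + r2 * y2) = C11 + C22 by rewrite /C11 /C22; ring.
have : (C11 + C22) ^+ 2 <= C11^+2 + C21^+2 + C12^+2 + C22^+2 + 2 * det.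
  rewrite -subr_ge0.
  have -> : C11 ^+ 2 + C21 ^+ 2 + C12 ^+ 2 + C22 ^+ 2 + 2 * det - (C11 + C22) ^+ 2 = (C12 - C21) ^+ 2 by rewrite /det; ring.
  exact: sqr_ge0.
lra.
Qed.


Definition qf (A : 'M[R]_3) (v w : 'I_3 -> R) := \sum_(i < 3) \sum_(j < 3) v i * A i j * w j.

Lemma psd_form A (v w : 'I_3 -> R) (s t : R) : psd_mx A ->
  0 <= s ^+ 2 * qf A v v + 2 * s * t * qf A v w + t ^+ 2 * qf A w w.
Proof.
move=> [hs hq].
have s01 : A 1 0 = A 0 1 by rewrite -{1}hs mxE.
have s02 : A 2 0 = A 0 2 by rewrite -{1}hs mxE.
have s12 : A 2 1 = A 1 2 by rewrite -{1}hs mxE.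
have := hq (\matrix_(i, j) (s * v i + t * w i)).
rewrite mxE sum3 !mxE !sum3 !mxE /qf !sum3 s01 s02 s12.
move=> h; apply: (le_trans h); rewrite le_eqVlt; apply/orP; left; apply/eqP; ring.
Qed.

Lemma qf_sym A v w : A^T = A -> qf A v w = qf A w v.
Proof.
move=> hs.
have s01 : A 1 0 = A 0 1 by rewrite -{1}hs mxE.
have s02 : A 2 0 = A 0 2 by rewrite -{1}hs mxE.
have s12 : A 2 1 = A 1 2 by rewrite -{1}hs mxE.
rewrite /qf !sum3 s01 s02 s12; ring.
Qed.

Lemma qf_ge0 A v : psd_mx A -> 0 <= qf A v v.
Proof. move=> h; have := psd_form A v v 1 0 h. by rewrite !(expr0n, expr1n, mulr0, mul0r, mulr1, add0r, addr0, mul1r). Qed.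

Definition Av (A : 'M[R]_3) (v : 'I_3 -> R) i := \sum_(j < 3) A i j * v j.

Lemma qf_zero A v : psd_mx A -> qf A v v = 0 -> forall i, Av A v i = 0.
Proof.
move=> hA h0.
set w := Av A v.
have hm : qf A v w = w 0 ^+ 2 + w 1 ^+ 2 + w 2 ^+ 2.
  have [hs _] := hA.
  have s01 : A 1 0 = A 0 1 by rewrite -{1}hs mxE.
  have s02 : A 2 0 = A 0 2 by rewrite -{1}hs mxE.
  have s12 : A 2 1 = A 1 2 by rewrite -{1}hs mxE.
  rewrite /w /Av /qf !sum3 s01 s02 s12; ring.
set m := w 0 ^+ 2 + w 1 ^+ 2 + w 2 ^+ 2 in hm.
have k0 := qf_ge0 A w hA.
have := psd_form A v w (- (qf A w w + 1)) m hA.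
rewrite h0 hm mulr0 add0r => hh.
have mz : m = 0.
  have : 0 <= - (m ^+ 2 * (qf A w w + 2)) by apply: (le_trans hh); rewrite le_eqVlt; apply/orP; left; apply/eqP; ring.
  rewrite oppr_ge0 pmulr_lle0; last lra.
  move=> h2; apply/eqP; rewrite -sqrf_eq0 eq_le h2 sqr_ge0 //.
have w0 : w 0 = 0 by apply/eqP; rewrite -sqrf_eq0; apply/eqP; move: mz; rewrite /m; nra.
have w1 : w 1 = 0 by apply/eqP; rewrite -sqrf_eq0; apply/eqP; move: mz; rewrite /m; nra.
have w2 : w 2 = 0 by apply/eqP; rewrite -sqrf_eq0; apply/eqP; move: mz; rewrite /m; nra.
move=> i; have : i = 0 \/ i = 1 \/ i = 2.
  case: i => [[|[|[|//]]] hi]; [left|right;left|right;right]; exact: val_inj.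
by case=> [->|[->|->]].
Qed.


Definition pq L i := ((gc L + Num.sqrt (gG L)) * L i 0 - gb L * L i 1) / (Num.sqrt (gG L) * nuc L).
Definition pr L i := ((ga L + Num.sqrt (gG L)) * L i 1 - gb L * L i 0) / (Num.sqrt (gG L) * nuc L).

Lemma nuc_sq L : nuc L ^+ 2 = ga L + gc L + 2 * Num.sqrt (gG L).
Proof. by rewrite /nuc sqr_sqrtr // !addr_ge0 ?ga_ge0 ?gc_ge0 // mulr_ge0 // sqrtr_ge0. Qed.

Lemma nuc_ge0 L : 0 <= nuc L.
Proof. exact: sqrtr_ge0. Qed.

Lemma polar_props L : 0 < gG L ->
  [/\ dot3 (pq L) (pq L) = 1, dot3 (pr L) (pr L) = 1, dot3 (pq L) (pr L) = 0 &
      linq (pq L) (pr L) L = nuc L].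
Proof.
move=> Gp.
have u2 := nuc_sq L.
have g2 : Num.sqrt (gG L) ^+ 2 = gG L by rewrite sqr_sqrtr // ltW.
have g0 : 0 < Num.sqrt (gG L) by rewrite sqrtr_gt0.
have u0 : 0 < nuc L.
  rewrite lt_neqAle nuc_ge0 andbT; apply/eqP => h.
  move: u2; rewrite -h expr0n /= => h2.
  have := ga_ge0 L; have := gc_ge0 L; lra.
rewrite /pq /pr /dot3 /linq sum3.
set g := Num.sqrt (gG L) in g2 g0 u2 *; set u := nuc L in u2 u0 *.
have k1 : (g * u)^-1 * (g * u) = 1 by rewrite mulVf // mulf_neq0 // gt_eqF.
rewrite /gG in g2.
set k := (g * u)^-1 in k1 *.
move: g2 u2; rewrite !gaE !gbE !gcE => g2 u2.
set x0 := L 0 0 in g2 u2 *; set x1 := L 1 0 in g2 u2 *; set x2 := L 2 0 in g2 u2 *.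
set y0 := L 0 1 in g2 u2 *; set y1 := L 1 1 in g2 u2 *; set y2 := L 2 1 in g2 u2 *.
set a := x0 ^+ 2 + x1 ^+ 2 + x2 ^+ 2 in g2 u2 *.
set c := y0 ^+ 2 + y1 ^+ 2 + y2 ^+ 2 in g2 u2 *.
set b := x0 * y0 + x1 * y1 + x2 * y2 in g2 u2 *.
have kk : (k * g * u) ^+ 2 = 1 by rewrite -mulrA k1 expr1n.
split.
- apply: (@eq_via3 _ _ (- (c + 2 * g) * k ^+ 2) _ _ (- g ^+ 2 * k ^+ 2) _ _ 1 _ _ g2 u2 kk).
  rewrite /a /b /c; ring.
- apply: (@eq_via3 _ _ (- (a + 2 * g) * k ^+ 2) _ _ (- g ^+ 2 * k ^+ 2) _ _ 1 _ _ g2 u2 kk).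
  rewrite /a /b /c; ring.
- apply: (@eq_via3 _ _ (b * k ^+ 2) _ _ 0 _ _ 0 _ _ g2 u2 kk).
  rewrite /a /b /c; ring.
- apply: (@eq_via3 _ _ (- 2 * k) _ _ (- g * k) _ _ u _ _ g2 u2 k1).
  rewrite /a /b /c; ring.
Qed.


Lemma polar_psd L A : 0 < gG L -> psd_mx A ->
  0 <= linq (pq L) (pr L) (A *m L) /\ (A *m L != 0 -> 0 < linq (pq L) (pr L) (A *m L)).
Proof.
move=> Gp hA; have [hs _] := hA.
have s01 : A 1 0 = A 0 1 by rewrite -{1}hs mxE.
have s02 : A 2 0 = A 0 2 by rewrite -{1}hs mxE.
have s12 : A 2 1 = A 1 2 by rewrite -{1}hs mxE.
set x := fun i : 'I_3 => L i 0; set y := fun i : 'I_3 => L i 1.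
have u2 := nuc_sq L.
have g2 : Num.sqrt (gG L) ^+ 2 = gG L by rewrite sqr_sqrtr // ltW.
have g0 : 0 < Num.sqrt (gG L) by rewrite sqrtr_gt0.
have u0 : 0 < nuc L.
  rewrite lt_neqAle nuc_ge0 andbT; apply/eqP => h.
  move: u2; rewrite -h expr0n /= => h2.
  have := ga_ge0 L; have := gc_ge0 L; lra.
have E : linq (pq L) (pr L) (A *m L) = (Num.sqrt (gG L) * nuc L)^-1 *
   ((gc L + Num.sqrt (gG L)) * qf A x x + (ga L + Num.sqrt (gG L)) * qf A y y - 2 * gb L * qf A x y).
  rewrite /linq /pq /pr sum3 !mxE !sum3 /qf !sum3 /x /y s01 s02 s12; ring.
rewrite E.
set g := Num.sqrt (gG L) in g2 g0 u2 E *; set u := nuc L in u2 u0 E *.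
set al := qf A x x; set be := qf A x y; set ga' := qf A y y.
have al0 : 0 <= al by exact: qf_ge0.
have ga0 : 0 <= ga' by exact: qf_ge0.
have Q s t := psd_form A x y s t hA.
rewrite -/al -/be -/ga' in Q.
have a0 := ga_ge0 L; have c0 := gc_ge0 L.
rewrite /gG in g2 Gp.
set a := ga L in a0 g2 Gp *; set b := gb L in g2 Gp *; set c := gc L in c0 g2 Gp *.
have D0 : 0 <= c * al + a * ga' - 2 * b * be.
  have [ap|an] := boolP (0 < a).
    have h1 := Q b (- a).
    have : 0 <= a * (c * al + a * ga' - 2 * b * be).
      have -> : a * (c * al + a * ga' - 2 * b * be) = (a * c - b ^+ 2) * al + (b ^+ 2 * al + 2 * b * - a * be + (- a) ^+ 2 * ga') by ring.
      by apply: addr_ge0 => //; apply: mulr_ge0 => //; lra.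
    by rewrite pmulr_rge0.
  have az : a = 0 by apply/eqP; rewrite eq_le a0 andbT leNgt.
  have bz : b = 0 by move: Gp; rewrite az mul0r sub0r oppr_gt0 => h; have := sqr_ge0 b; lra.
  rewrite az bz; nra.
have k0 : 0 < (g * u)^-1 by rewrite invr_gt0 mulr_gt0.
split.
  apply: mulr_ge0; first exact: ltW.
  have : 0 <= g * (al + ga') by apply: mulr_ge0; [exact: ltW | exact: addr_ge0].
  lra.
move=> ALn0.
apply: mulr_gt0 => //.
have [pos|npos] := boolP (0 < al + ga').
  have : 0 < g * (al + ga') by apply: mulr_gt0.
  lra.
have alz : al = 0 by lra.
have gaz : ga' = 0 by lra.
have hx := qf_zero A x hA alz.
have hy := qf_zero A y hA gaz.
exfalso; move/eqP: ALn0; apply; apply/matrixP => i j; rewrite !mxE.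
case: (ord2 j) => ->.
  by have := hx i; rewrite /Av /x.
by have := hy i; rewrite /Av /y.
Qed.


Lemma cs6 (x0 x1 x2 y0 y1 y2 z0 z1 z2 w0 w1 w2 : R) :
  (x0*z0 + x1*z1 + x2*z2 + y0*w0 + y1*w1 + y2*w2) ^+ 2 <=
  (x0^+2 + x1^+2 + x2^+2 + y0^+2 + y1^+2 + y2^+2) * (z0^+2 + z1^+2 + z2^+2 + w0^+2 + w1^+2 + w2^+2).
Proof.
rewrite -subr_ge0.
have -> : (x0^+2 + x1^+2 + x2^+2 + y0^+2 + y1^+2 + y2^+2) * (z0^+2 + z1^+2 + z2^+2 + w0^+2 + w1^+2 + w2^+2)
  - (x0*z0 + x1*z1 + x2*z2 + y0*w0 + y1*w1 + y2*w2) ^+ 2 = (x0*z1 - x1*z0)^+2 + (x0*z2 - x2*z0)^+2 + (x0*w0 - y0*z0)^+2 + (x0*w1 - y1*z0)^+2 + (x0*w2 - y2*z0)^+2 + (x1*z2 - x2*z1)^+2 + (x1*w0 - y0*z1)^+2 + (x1*w1 - y1*z1)^+2 + (x1*w2 - y2*z1)^+2 + (x2*w0 - y0*z2)^+2 + (x2*w1 - y1*z2)^+2 + (x2*w2 - y2*z2)^+2 + (y0*w1 - y1*w0)^+2 + (y0*w2 - y2*w0)^+2 + (y1*w2 - y2*w1)^+2 by ring.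
by rewrite !addr_ge0 ?sqr_ge0.
Qed.

Definition Fr (L : 'M[R]_(3,2)) := Num.sqrt (ga L + gc L).
Definition fq (L : 'M[R]_(3,2)) (i : 'I_3) := L i 0 / Fr L.
Definition fr (L : 'M[R]_(3,2)) (i : 'I_3) := L i 1 / Fr L.

Lemma Fr_le_nuc L : Fr L <= nuc L.
Proof. rewrite /Fr /nuc; apply: ler_wsqrtr; rewrite lerDl; apply: mulr_ge0 => //; exact: sqrtr_ge0. Qed.

Lemma Fr_eq_nuc L : gG L = 0 -> nuc L = Fr L.
Proof. by move=> h; rewrite /nuc /Fr h sqrtr0 mulr0 addr0. Qed.

Lemma fpolar L : 0 < ga L + gc L ->
  [/\ forall L', linq (fq L) (fr L) L' <= Fr L', linq (fq L) (fr L) L = Fr L &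
      forall A, psd_mx A -> 0 <= linq (fq L) (fr L) (A *m L)].
Proof.
move=> Np.
have F0 : 0 < Fr L by rewrite sqrtr_gt0.
have F2 : Fr L ^+ 2 = ga L + gc L by rewrite sqr_sqrtr // ltW.
have kF : (Fr L)^-1 * Fr L = 1 by rewrite mulVf // gt_eqF.
split.
- move=> L'; apply: le_sqrt_sq.
  rewrite /linq /fq /fr sum3.
  have -> : L 0 0 / Fr L * L' 0 0 + L 0 1 / Fr L * L' 0 1 + (L 1 0 / Fr L * L' 1 0 + L 1 1 / Fr L * L' 1 1) +
     (L 2 0 / Fr L * L' 2 0 + L 2 1 / Fr L * L' 2 1) = (Fr L)^-1 * (L 0 0 * L' 0 0 + L 1 0 * L' 1 0 + L 2 0 * L' 2 0
     + L 0 1 * L' 0 1 + L 1 1 * L' 1 1 + L 2 1 * L' 2 1) by ring.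
  rewrite exprMn.
  apply: (le_trans (ler_wpM2l (sqr_ge0 _) (cs6 _ _ _ _ _ _ _ _ _ _ _ _))).
  have -> : L 0 0 ^+ 2 + L 1 0 ^+ 2 + L 2 0 ^+ 2 + L 0 1 ^+ 2 + L 1 1 ^+ 2 + L 2 1 ^+ 2 = Fr L ^+ 2.
    by rewrite F2 gaE gcE; ring.
  rewrite mulrA -exprMn kF expr1n mul1r gaE gcE.
  by rewrite le_eqVlt; apply/orP; left; apply/eqP; ring.
- rewrite /linq /fq /fr sum3.
  apply: (@eq_via2 _ _ (- (Fr L)^-1) _ _ (Fr L) _ _ F2 kF).
  rewrite gaE gcE; ring.
- move=> A hA.
  have -> : linq (fq L) (fr L) (A *m L) = (Fr L)^-1 * (qf A (fun i => L i 0) (fun i => L i 0) + qf A (fun i => L i 1) (fun i => L i 1)).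
    rewrite /linq /fq /fr /qf sum3 !mxE !sum3; ring.
  apply: mulr_ge0; first by rewrite invr_ge0 ltW.
  by apply: addr_ge0; apply: qf_ge0.
Qed.


Lemma ord3 (i : 'I_3) : i = 0 \/ i = 1 \/ i = 2.
Proof. case: i => [[|[|[|//]]] hi]; [left|right;left|right;right]; exact: val_inj. Qed.

Lemma rank2_G L : \rank L = 2%N -> 0 < gG L.
Proof.
move=> hr.
have rf : row_full L by rewrite /row_full hr.
have [B hB] := row_fullP rf.
rewrite lt_neqAle gG_ge0 andbT; apply/negP => /eqP /esym G0.
have kill : forall p q : R, (forall i, L i 0 * p + L i 1 * q = 0) -> p = 0 /\ q = 0.
  move=> p q h.
  pose v : 'cV[R]_2 := \matrix_(i, j) (if i == 0 then p else q).
  have Lv : L *m v = 0.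
    apply/matrixP => i j; rewrite !mxE sum2 !mxE /=; exact: h.
  have v0 : v = 0 by rewrite -[v]mul1mx -hB -mulmxA Lv mulmx0.
  split.
    by have := congr1 (fun M : 'cV[R]_2 => M 0 0) v0; rewrite !mxE.
  by have := congr1 (fun M : 'cV[R]_2 => M 1 0) v0; rewrite !mxE.
have [a0|an0] := eqVneq (ga L) 0.
  have [x0 [x1 x2]] : L 0 0 = 0 /\ L 1 0 = 0 /\ L 2 0 = 0.
    move: a0; rewrite gaE => h.
    have := sqr_ge0 (L 0 0); have := sqr_ge0 (L 1 0); have := sqr_ge0 (L 2 0).
    move=> h0 h1 h2.
    split; [|split]; apply/eqP; rewrite -sqrf_eq0 eq_le sqr_ge0 andbT; lra.
  have [] := kill 1 0.
    by move=> i; case: (ord3 i) => [->|[->|->]]; rewrite ?x0 ?x1 ?x2 mulr0 mul0r addr0.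
  move=> /eqP; by rewrite oner_eq0.
have [] := kill (gb L) (- ga L).
  have sq : (L 0 0 * gb L - L 0 1 * ga L) ^+ 2 + (L 1 0 * gb L - L 1 1 * ga L) ^+ 2
      + (L 2 0 * gb L - L 2 1 * ga L) ^+ 2 = ga L * gG L.
    rewrite /gG gaE gbE gcE; ring.
  rewrite G0 mulr0 in sq.
  have := sqr_ge0 (L 0 0 * gb L - L 0 1 * ga L); have := sqr_ge0 (L 1 0 * gb L - L 1 1 * ga L).
  have := sqr_ge0 (L 2 0 * gb L - L 2 1 * ga L) => h2 h1 h0.
  have e : forall i, (L i 0 * gb L - L i 1 * ga L) ^+ 2 = 0.
    by move=> i; apply/eqP; rewrite eq_le sqr_ge0 andbT; case: (ord3 i) => [->|[->|->]]; lra.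
  move=> i; have /eqP := e i; rewrite sqrf_eq0 subr_eq0 => /eqP ->; by rewrite mulrN subrr.
by move=> _ /eqP; rewrite oppr_eq0 (negbTE an0).
Qed.

End Alg.

Section Glue.
Context {R : realType}.
Set Implicit Arguments. Unset Strict Implicit.
Implicit Types f g : R -> R.

Lemma Sm_sub f g : Sm f -> Sm g -> Sm (fun y => f y - g y).
Proof.
move=> hf hg.
have -> : (fun y => f y - g y) = (fun y => f y + (fun _ => -1) y * g y).
  by apply/funext => y /=; rewrite mulN1r.
exact: (Sm_add hf (Sm_mul (Sm_cst (-1)) hg)).
Qed.

Lemma Sm_sq f : Sm f -> Sm (fun y => f y ^+ 2).
Proof.
move=> hf; have -> : (fun y => f y ^+ 2) = (fun y => f y * f y) by apply/funext => y; rewrite expr2.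
exact: Sm_mul.
Qed.

Lemma Sm_scale (k : R) f : Sm f -> Sm (fun y => k * f y).
Proof. move=> hf; exact: (Sm_mul (Sm_cst k) hf). Qed.

Lemma d1_sum n (F : 'I_n -> R -> R) x : (forall i, dv (F i) x) ->
  dv (fun y => \sum_(i < n) F i y) x /\
  D1 (fun y => \sum_(i < n) F i y) x = \sum_(i < n) D1 (F i) x.
Proof.
elim: n F => [|n IH] F hF.
  have -> : (fun y => \sum_(i < 0) F i y) = (fun _ => 0) by apply/funext => y; rewrite big_ord0.
  by rewrite big_ord0; exact: d1_cst.
have -> : (fun y => \sum_(i < n.+1) F i y) =
   (fun y => \sum_(i < n) F (widen_ord (leqnSn n) i) y + F ord_max y).
  by apply/funext => y; rewrite big_ord_recr.
have [d1 e1] := IH (fun i => F (widen_ord (leqnSn n) i)) (fun i => hF _).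
have [d2 e2] := d1_add d1 (hF ord_max).
by split => //; rewrite e2 e1 big_ord_recr.
Qed.

Lemma d1_scal (k : R) f x : dv f x -> dv (fun y => k * f y) x /\ D1 (fun y => k * f y) x = k * D1 f x.
Proof.
move=> df; have [h1 h2] := d1_mul (d1_cst k x).1 df.
by split => //; rewrite h2 (d1_cst k x).2 mul0r add0r.
Qed.

Lemma lin_d1 q r (E : R -> 'M[R]_(3,2)) x : (forall i j, dv (fun s => E s i j) x) ->
  dv (fun s => linq q r (E s)) x /\
  D1 (fun s => linq q r (E s)) x = linq q r (\matrix_(i, j) D1 (fun s => E s i j) x).
Proof.
move=> hE; rewrite /linq.
have hF : forall i, dv (fun s => q i * E s i 0 + r i * E s i 1) x.
  by move=> i; exact: (d1_add (d1_scal (q i) (hE i 0)).1 (d1_scal (r i) (hE i 1)).1).1.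
have [d e] := @d1_sum 3 (fun i s => q i * E s i 0 + r i * E s i 1) x hF.
split; first exact: d.
rewrite e; apply: eq_bigr => i _.
rewrite (d1_add (d1_scal (q i) (hE i 0)).1 (d1_scal (r i) (hE i 1)).1).2.
by rewrite (d1_scal (q i) (hE i 0)).2 (d1_scal (r i) (hE i 1)).2 !mxE.
Qed.

Lemma lin_Sm q r (E : R -> 'M[R]_(3,2)) : (forall i j, Sm (fun s => E s i j)) ->
  Sm (fun s => linq q r (E s)) /\
  forall t, D1 (D1 (fun s => linq q r (E s))) t =
     linq q r (\matrix_(i, j) D1 (D1 (fun s => E s i j)) t).
Proof.
move=> hE.
pose E1 s : 'M[R]_(3,2) := \matrix_(i, j) D1 (fun s => E s i j) s.
have eE1 i j : (fun s => E1 s i j) = D1 (fun s => E s i j).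
  by apply/funext => s; rewrite /E1 mxE.
have eq1 : D1 (fun s => linq q r (E s)) = (fun s => linq q r (E1 s)).
  by apply/funext => s; rewrite (lin_d1 q r (fun i j => (hE i j s).1)).2.
have hE1 : forall i j x, dv (fun s => E1 s i j) x.
  by move=> i j x; rewrite eE1; exact: (hE i j x).2.
split.
  move=> x; split; first exact: (lin_d1 q r (fun i j => (hE i j x).1)).1.
  rewrite eq1; exact: (lin_d1 q r (fun i j => hE1 i j x)).1.
move=> t; rewrite eq1 (lin_d1 q r (fun i j => hE1 i j t)).2.
congr linq; apply/matrixP => i j; rewrite !mxE.
by rewrite eE1.
Qed.

Lemma phi_trick f phi t : C2at f t -> C2at phi t -> (forall x, phi x <= f x) -> phi t = f t ->
  D1 (D1 phi) t <= D1 (D1 f) t.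
Proof.
move=> hf hp hle heq.
have [[hc1 hc2] he] := C2at_sub hf hp.
have h0 : forall x, 0 <= (fun y => f y - phi y) x by move=> x; rewrite /= subr_ge0.
have ht : (fun y => f y - phi y) t = 0 by rewrite /= heq subrr.
have := d2_min hc1 hc2 h0 ht.
by rewrite he subr_ge0.
Qed.

Lemma mvt_ab g dg (a b : R) : a < b -> (forall x, a <= x <= b -> is_derive x 1 g (dg x)) ->
  exists c, a < c < b /\ g b - g a = dg c * (b - a).
Proof.
move=> ab hd.
have hd' : forall x, x \in `]a, b[%R -> is_derive x 1 g (dg x).
  by move=> x; rewrite in_itv /= => /andP [h1 h2]; apply: hd; rewrite !ltW.
have hc : {within `[a, b], continuous g}.
  apply: derivable_within_continuous => x; rewrite in_itv /= => hx.
  exact: (@ex_derive _ _ _ _ _ _ _ (hd x hx)).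
have [c cI e] := MVT ab hd' hc.
by exists c; split => //; move: cI; rewrite in_itv.
Qed.

Unset Implicit Arguments.
End Glue.

Section Glue2.
Context {R : realType}.
Set Implicit Arguments. Unset Strict Implicit.
Implicit Types f g : R -> R.

Lemma tangent_support f (s0 : R) : 0 <= s0 <= 1 ->
  (\forall t \near s0, C2at f t /\ (0 <= t <= 1 -> 0 <= D1 (D1 f) t)) ->
  exists k e, 0 < e /\ forall t, 0 <= t <= 1 -> `|s0 - t| < e -> f s0 + k * (t - s0) <= f t.
Proof.
move=> /andP [s00 s01] /near_ball [e e0 H].
exists (D1 f s0), e; split => // t /andP [t0 t1] hst.
move: hst; rewrite ltr_norml => /andP [h1 h2].
have inb x : Num.min t s0 <= x <= Num.max t s0 -> `|s0 - x| < e /\ 0 <= x <= 1.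
  move=> /andP [hx1 hx2]; rewrite ltr_norml.
  have m1 : Num.min t s0 <= t by rewrite ge_min lexx.
  have m2 : Num.min t s0 <= s0 by rewrite ge_min lexx orbT.
  have m3 : (Num.min t s0 == t) || (Num.min t s0 == s0).
    by rewrite /Num.min; case: ifP => _; rewrite eqxx ?orbT.
  have M1 : t <= Num.max t s0 by rewrite le_max lexx.
  have M2 : s0 <= Num.max t s0 by rewrite le_max lexx orbT.
  have M3 : (Num.max t s0 == t) || (Num.max t s0 == s0).
    by rewrite /Num.max; case: ifP => _; rewrite eqxx ?orbT.
  move: m3 M3 => /orP [/eqP m3|/eqP m3] /orP [/eqP M3|/eqP M3]; rewrite m3 M3 in hx1 hx2;
    (split; [apply/andP; split; lra | apply/andP; split; lra]).
have D x : Num.min t s0 <= x <= Num.max t s0 -> is_derive x 1 f (D1 f x).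
  move=> /inb [hx _]; apply: dvP.
  exact: nbhs_singleton (H x hx).1.1.
have D2 x : Num.min t s0 <= x <= Num.max t s0 -> is_derive x 1 (D1 f) (D1 (D1 f) x).
  move=> /inb [hx _]; apply: dvP.
  exact: (H x hx).1.2.
have P x : Num.min t s0 <= x <= Num.max t s0 -> 0 <= D1 (D1 f) x.
  by move=> /inb [hx hx01]; exact: (H x hx).2.
have [lt|gt|eq] := ltgtP t s0.
- have mn : Num.min t s0 = t by rewrite /Num.min lt.
  have mx : Num.max t s0 = s0 by rewrite /Num.max lt.
  rewrite mn mx in D D2 P.
  have [c [/andP [c1 c2] ec]] := mvt_ab lt (fun x hx => D x hx).
  have D2' : forall x, c <= x <= s0 -> is_derive x 1 (D1 f) (D1 (D1 f) x).
    by move=> x /andP [hh1 hh2]; apply: D2; apply/andP; split; lra.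
  have [c' [/andP [c'1 c'2] ec']] := mvt_ab c2 D2'.
  have Pc : 0 <= D1 (D1 f) c' by apply: P; apply/andP; split; lra.
  have : D1 f c <= D1 f s0.
    have : 0 <= D1 (D1 f) c' * (s0 - c) by apply: mulr_ge0; lra.
    lra.
  move=> hle.
  have : D1 f c * (s0 - t) <= D1 f s0 * (s0 - t) by apply: ler_wpM2r => //; lra.
  lra.
- have mn : Num.min t s0 = s0 by rewrite /Num.min ltNge (ltW gt).
  have mx : Num.max t s0 = t by rewrite /Num.max ltNge (ltW gt).
  rewrite mn mx in D D2 P.
  have [c [/andP [c1 c2] ec]] := mvt_ab gt (fun x hx => D x hx).
  have D2' : forall x, s0 <= x <= c -> is_derive x 1 (D1 f) (D1 (D1 f) x).
    by move=> x /andP [hh1 hh2]; apply: D2; apply/andP; split; lra.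
  have [c' [/andP [c'1 c'2] ec']] := mvt_ab c1 D2'.
  have Pc : 0 <= D1 (D1 f) c' by apply: P; apply/andP; split; lra.
  have : D1 f s0 <= D1 f c.
    have : 0 <= D1 (D1 f) c' * (c - s0) by apply: mulr_ge0; lra.
    lra.
  move=> hle.
  have : D1 f s0 * (t - s0) <= D1 f c * (t - s0) by apply: ler_wpM2r => //; lra.
  lra.
- by rewrite eq subrr mulr0 addr0.
Qed.

Unset Implicit Arguments.
End Glue2.

Section Glue3.
Context {R : realType}.
Set Implicit Arguments. Unset Strict Implicit.

Lemma dv_add' (f g : R -> R) x : dv f x -> dv g x -> dv (fun y => f y + g y) x.
Proof. by move=> a b; exact: (d1_add a b).1. Qed.
Lemma dv_sub' (f g : R -> R) x : dv f x -> dv g x -> dv (fun y => f y - g y) x.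
Proof. by move=> a b; exact: (d1_sub a b).1. Qed.
Lemma dv_mul' (f g : R -> R) x : dv f x -> dv g x -> dv (fun y => f y * g y) x.
Proof. by move=> a b; exact: (d1_mul a b).1. Qed.
Lemma dv_cst' (k x : R) : dv (fun _ => k) x.
Proof. exact: (d1_cst k x).1. Qed.
Lemma dv_id' (x : R) : dv (fun y => y) x.
Proof. rewrite /dv; exact: derivable_id. Qed.

Lemma chord_le (u : R -> R) (x y : R) : 0 <= x -> x < y -> y <= 1 ->
  (forall s, {for s, continuous u}) ->
  (forall s0, 0 <= s0 <= 1 -> exists k e, 0 < e /\ forall t, 0 <= t <= 1 -> `|s0 - t| < e -> u s0 + k * (t - s0) <= u t) ->
  forall z, x <= z <= y -> u z <= u x + (u y - u x) / (y - x) * (z - x).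
Proof.
move=> x0 xy y1 uc sup z /andP [zx zy].
rewrite leNgt; apply/negP => hz.
set m := (u y - u x) / (y - x) in hz *.
have yx0 : 0 < y - x by lra.
have my : m * (y - x) = u y - u x by rewrite /m divfK // gt_eqF.
set gap := u z - (u x + m * (z - x)).
have gap0 : 0 < gap by rewrite /gap; lra.
set del := gap / (2 * (y - x) ^+ 2).
have del0 : 0 < del by rewrite /del divr_gt0 // mulr_gt0 // exprn_gt0.
have delE : del * (2 * (y - x) ^+ 2) = gap by rewrite /del divfK // mulf_neq0 // expf_neq0 // gt_eqF.
pose p (t : R) := (-1) * (u x + m * (t - x)) + del * ((t - x) * (t - y)).
have pd : forall s, dv p s.
  move=> s; rewrite /p.
  apply: dv_add'.
  - apply: dv_mul'; first exact: dv_cst'.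
    apply: dv_add'; first exact: dv_cst'.
    apply: dv_mul'; first exact: dv_cst'.
    apply: dv_sub'; [exact: dv_id' | exact: dv_cst'].
  - apply: dv_mul'; first exact: dv_cst'.
    apply: dv_mul'; (apply: dv_sub'; [exact: dv_id' | exact: dv_cst']).
pose w := u + p.
have wE : forall t, w t = u t - (u x + m * (t - x)) + del * ((t - x) * (t - y)).
  move=> t; change (u t + ((-1) * (u x + m * (t - x)) + del * ((t - x) * (t - y))) = u t - (u x + m * (t - x)) + del * ((t - x) * (t - y))); ring.
have wc : {within `[x, y], continuous w}.
  apply: continuous_subspaceT => s; apply: continuousD; [exact: uc | exact: der_cont (pd s)].
have [c cI cmax] := EVT_max (ltW xy) wc.
have wx : w x = 0 by rewrite wE; ring.
have wy : w y = 0 by rewrite wE my; ring.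
have wz : 0 < w z.
  rewrite wE -/gap.
  have : del * ((z - x) * (y - z)) <= del * (y - x) ^+ 2.
    apply: ler_wpM2l; first exact: ltW.
    rewrite expr2; apply: ler_pM; lra.
  nra.
have wcz : w z <= w c by apply: cmax; rewrite in_itv /=; apply/andP; split.
move: cI; rewrite in_itv /= => /andP [cx cy].
have cx' : x < c.
  rewrite lt_neqAle cx andbT; apply/eqP => ec; move: wcz; rewrite -ec wx; lra.
have cy' : c < y.
  rewrite lt_neqAle cy andbT; apply/eqP => ec; move: wcz; rewrite ec wy; lra.
have [k [e [e0 He]]] := sup c ltac:(apply/andP; split; lra).
set K := k - m + del * (2 * c - x - y).
set eta := Num.min e (Num.min (c - x) (y - c)) / 2.
have m1 : Num.min e (Num.min (c - x) (y - c)) <= e by rewrite ge_min lexx.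
have m2 : Num.min e (Num.min (c - x) (y - c)) <= c - x by rewrite !ge_min lexx !orbT.
have m3 : Num.min e (Num.min (c - x) (y - c)) <= y - c by rewrite !ge_min lexx !orbT.
have m0 : 0 < Num.min e (Num.min (c - x) (y - c)) by rewrite !lt_min e0 !subr_gt0 cx' cy'.
have eta0 : 0 < eta by rewrite /eta; lra.
have etae : eta < e by rewrite /eta; lra.
have etax : eta < c - x by rewrite /eta; lra.
have etay : eta < y - c by rewrite /eta; lra.
pose t := if 0 <= K then c + eta else c - eta.
have tK : 0 <= K * (t - c).
  rewrite /t; case: ifP => hK.
    by rewrite addrC addKr mulr_ge0 // ltW.
  have : K < 0 by rewrite ltNge hK.
  move=> hK'; have -> : c - eta - c = - eta by ring.
  by rewrite mulrN oppr_ge0 pmulr_lle0 // ltW.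
have tc2 : (t - c) ^+ 2 = eta ^+ 2.
  by rewrite /t; case: ifP => _; ring.
have tr : x < t < y by rewrite /t; case: ifP => _; apply/andP; split; lra.
move: tr => /andP [tx ty].
have hut : u c + k * (t - c) <= u t.
  apply: He; first by apply/andP; split; lra.
  have -> : c - t = - (t - c) by ring.
  rewrite normrN -(sqrtr_sqr (t - c)) tc2 sqrtr_sqr ger0_norm; lra.
have wtc : w t <= w c by apply: cmax; rewrite in_itv /=; apply/andP; split; lra.
have : w t - w c = (u t - (u c + k * (t - c))) + K * (t - c) + del * (t - c) ^+ 2.
  by rewrite !wE /K; ring.
rewrite tc2 => eq.
have : 0 < del * eta ^+ 2 by apply: mulr_gt0 => //; exact: exprn_gt0.
lra.
Qed.

Lemma convex_of_support (u : R -> R) : (forall s, {for s, continuous u}) ->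
  (forall s0, 0 <= s0 <= 1 -> exists k e, 0 < e /\ forall t, 0 <= t <= 1 -> `|s0 - t| < e -> u s0 + k * (t - s0) <= u t) ->
  convex_on 0 1 u.
Proof.
move=> uc sup x y l /andP [x0 x1] /andP [y0 y1] /andP [l0 l1].
have [xy|yx|exy] := ltgtP x y.
- have := chord_le x0 xy y1 uc sup (z := (1 - l) * x + l * y) _.
  move=> /(_ _)/Wrap[]; first by apply/andP; split; nra.
  have -> : (u y - u x) / (y - x) * ((1 - l) * x + l * y - x) = l * (u y - u x).
    by field; rewrite subr_eq0 gt_eqF.
  move=> h; apply: (le_trans h); rewrite le_eqVlt; apply/orP; left; apply/eqP; ring.
- have := chord_le y0 yx x1 uc sup (z := (1 - l) * x + l * y) _.
  move=> /(_ _)/Wrap[]; first by apply/andP; split; nra.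
  have -> : (u x - u y) / (x - y) * ((1 - l) * x + l * y - y) = (1 - l) * (u x - u y).
    by field; rewrite subr_eq0 gt_eqF.
  move=> h; apply: (le_trans h); rewrite le_eqVlt; apply/orP; left; apply/eqP; ring.
- rewrite exy; have -> : (1 - l) * y + l * y = y by ring.
  rewrite le_eqVlt; apply/orP; left; apply/eqP; ring.
Qed.

Unset Implicit Arguments.
End Glue3.

Section Cont.
Context {R : realType}.
Set Implicit Arguments. Unset Strict Implicit.
Implicit Types f g : R -> R.

Lemma cont_add f g s : {for s, continuous f} -> {for s, continuous g} ->
  {for s, continuous (fun y => f y + g y)}.
Proof.
move=> a b; have -> : (fun y => f y + g y) = f + g by apply/funext.
exact: continuousD.
Qed.

Lemma cont_mul f g s : {for s, continuous f} -> {for s, continuous g} ->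
  {for s, continuous (fun y => f y * g y)}.
Proof.
move=> a b; have -> : (fun y => f y * g y) = f \* g by apply/funext.
exact: continuousM.
Qed.

Lemma cont_sqrt f s : {for s, continuous f} -> {for s, continuous (fun y => Num.sqrt (f y))}.
Proof.
move=> a; have -> : (fun y => Num.sqrt (f y)) = Num.sqrt \o f by apply/funext.
apply: continuous_comp => //; exact: sqrt_continuous.
Qed.

Unset Implicit Arguments.
End Cont.

Theorem propositionA3 (R : realType)
  (A : R -> 'M[R]_3) (T : R -> 'M[R]_(3, 2))
  (hAsmooth : forall i j, smooth_fun (fun s => A s i j))
  (hTsmooth : forall i j, smooth_fun (fun s => T s i j))
  (hApos : forall s, 0 <= s <= 1 -> psd_mx (A s))
  (hode : forall s, 0 <= s <= 1 -> forall i j,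
     derive1 (derive1 (fun t => T t i j)) s = (A s *m T s) i j) :
  convex_on 0 1 (fun s => schatten1 (T s)) /\
  (forall s, 0 <= s <= 1 -> \rank (T s) = 2%N -> A s *m T s != 0 ->
     (\forall t \near s, derivable (fun r => schatten1 (T r)) t 1) /\
     derivable (derive1 (fun r => schatten1 (T r))) s 1 /\
     0 < derive1 (derive1 (fun r => schatten1 (T r))) s).
Proof.
have hSm : forall i j, Sm (fun s => T s i j).
  by move=> i j x; split; [exact: (hTsmooth i j 0%N x) | exact: (hTsmooth i j 1%N x)].
have hd2 : forall s, 0 <= s <= 1 -> forall i j, D1 (D1 (fun t => T t i j)) s = (A s *m T s) i j.
  by move=> s hs i j; exact: (hode s hs i j).
pose u := fun s => nuc (T s).
have uE : (fun s => schatten1 (T s)) = u by apply/funext => s; rewrite schatten1E.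
have ha : Sm (fun s => ga (T s)).
  have -> : (fun s => ga (T s)) = (fun s => T s 0 0 ^+ 2 + T s 1 0 ^+ 2 + T s 2 0 ^+ 2).
    by apply/funext => s; rewrite gaE.
  exact: (Sm_add (Sm_add (Sm_sq (hSm 0 0)) (Sm_sq (hSm 1 0))) (Sm_sq (hSm 2 0))).
have hc : Sm (fun s => gc (T s)).
  have -> : (fun s => gc (T s)) = (fun s => T s 0 1 ^+ 2 + T s 1 1 ^+ 2 + T s 2 1 ^+ 2).
    by apply/funext => s; rewrite gcE.
  exact: (Sm_add (Sm_add (Sm_sq (hSm 0 1)) (Sm_sq (hSm 1 1))) (Sm_sq (hSm 2 1))).
have hb : Sm (fun s => gb (T s)).
  have -> : (fun s => gb (T s)) = (fun s => T s 0 0 * T s 0 1 + T s 1 0 * T s 1 1 + T s 2 0 * T s 2 1).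
    by apply/funext => s; rewrite gbE.
  exact: (Sm_add (Sm_add (Sm_mul (hSm 0 0) (hSm 0 1)) (Sm_mul (hSm 1 0) (hSm 1 1))) (Sm_mul (hSm 2 0) (hSm 2 1))).
have hG : Sm (fun s => gG (T s)) := Sm_sub (Sm_mul ha hc) (Sm_sq hb).
have hN : Sm (fun s => ga (T s) + gc (T s)) := Sm_add ha hc.
have C2u : forall t, 0 < gG (T t) -> C2at u t.
  move=> t Gp.
  have sG := C2at_sqrt (Sm_C2at t hG) Gp.
  have h2 := C2at_mul (Sm_C2at t (Sm_cst 2)) sG.
  have hP := C2at_add (Sm_C2at t hN) h2.
  apply: (C2at_sqrt hP).
  rewrite /=; apply: ltr_wpDl; first by apply: addr_ge0; [exact: ga_ge0 | exact: gc_ge0].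
  by apply: mulr_gt0 => //; rewrite sqrtr_gt0.
pose F := fun s => Fr (T s).
have C2F : forall t, 0 < ga (T t) + gc (T t) -> C2at F t.
  by move=> t Np; exact: (C2at_sqrt (Sm_C2at t hN) Np).
have hAT : forall t, 0 <= t <= 1 -> \matrix_(i, j) D1 (D1 (fun s => T s i j)) t = A t *m T t.
  by move=> t ht; apply/matrixP => i j; rewrite mxE hd2.
have uD2 : forall t, 0 <= t <= 1 -> 0 < gG (T t) ->
    linq (pq (T t)) (pr (T t)) (A t *m T t) <= D1 (D1 u) t.
  move=> t ht Gp.
  have [Sp p2] := lin_Sm (pq (T t)) (pr (T t)) hSm.
  rewrite -(hAT t ht) -p2.
  have [pp1 pp2 pp3 pp4] := polar_props (T t) Gp.
  apply: phi_trick.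
  - exact: C2u.
  - exact: Sm_C2at.
  - move=> x; exact: key_ineq.
  - exact: pp4.
have FD2 : forall t, 0 <= t <= 1 -> 0 < ga (T t) + gc (T t) -> 0 <= D1 (D1 F) t.
  move=> t ht Np.
  have [Sp p2] := lin_Sm (fq (T t)) (fr (T t)) hSm.
  have [f1 f2 f3] := fpolar (T t) Np.
  apply: (le_trans (f3 (A t) (hApos t ht))).
  rewrite -(hAT t ht) -p2.
  apply: phi_trick.
  - exact: C2F.
  - exact: Sm_C2at.
  - move=> x; exact: f1.
  - exact: f2.
have contG : forall s, {for s, continuous (fun s => gG (T s))} by move=> s; exact: der_cont (hG s).1.
have contN : forall s, {for s, continuous (fun s => ga (T s) + gc (T s))} by move=> s; exact: der_cont (hN s).1.
have contu : forall s, {for s, continuous u}.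
  move=> s; apply: cont_sqrt; apply: cont_add; first exact: contN.
  apply: cont_mul; first exact: cst_continuous.
  exact: cont_sqrt.
rewrite uE; split.
  apply: convex_of_support => // s0 hs0.
  have [Gp|G0] := ltP 0 (gG (T s0)).
    apply: tangent_support => //.
    have := contG s0; move=> /cvgr_gt /(_ 0 Gp) nG.
    apply: (filterS _ nG) => t Gt; split; first exact: C2u.
    move=> ht; apply: le_trans (uD2 t ht Gt).
    exact: (polar_psd (T t) (A t) Gt (hApos t ht)).1.
  have G00 : gG (T s0) = 0 by apply/eqP; rewrite eq_le G0 gG_ge0.
  have [Np|N0] := ltP 0 (ga (T s0) + gc (T s0)).
    have [k [e [e0 He]]] : exists k e, 0 < e /\ forall t, 0 <= t <= 1 -> `|s0 - t| < e -> F s0 + k * (t - s0) <= F t.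
      apply: tangent_support => //.
      have := contN s0; move=> /cvgr_gt /(_ 0 Np) nN.
      apply: (filterS _ nN) => t Nt; split; first exact: C2F.
      by move=> ht; exact: FD2.
    exists k, e; split => // t ht hst.
    have := He t ht hst; rewrite /u /F -Fr_eq_nuc // => h.
    exact: (le_trans h (Fr_le_nuc _)).
  exists 0, 1; split => // t _ _.
  have N00 : ga (T s0) + gc (T s0) = 0.
    by apply/eqP; rewrite eq_le N0 addr_ge0 // ?ga_ge0 ?gc_ge0.
  rewrite mul0r addr0 /u /nuc G00 sqrtr0 mulr0 addr0 N00 sqrtr0.
  exact: nuc_ge0.
move=> s hs hr hAT0.
have Gp := rank2_G (T s) hr.
have [h1 h2] := C2u s Gp.
split; first exact: h1.
split; first exact: h2.
apply: (lt_le_trans _ (uD2 s hs Gp)).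
exact: (polar_psd (T s) (A s) Gp (hApos s hs)).2.
Qed.
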